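(* Let $|q|<1$, let $x,y$ be complex numbers and let $n,m\ge 0$ be integers. Then $$h_n(x,y|q)\,h_m(x,y|q)=\sum_{l=0}^{\min\{m,n\}}\sum_{k=0}^{\min\{m,n\}}{m\brack l}{n\brack l}{m-l\brack k}{n-l\brack k}(q;q)_k(q;q)_l(-1)^k x^l y^k q^{\binom{k}{2}}\,h_{n+m-2l-k}(x,y|q).$$
   Context: Throughout $|q|<1$. $(a;q)_n=\prod_{j=0}^{n-1}(1-aq^j)$, ${n\brack k}=\frac{(q;q)_n}{(q;q)_k(q;q)_{n-k}}$ for $0\le k\le n$ and ${n\brack k}=0$ for $k>n$. $P_n(x,y)=(x-y)(x-qy)\cdots(x-q^{n-1}y)$ with $P_0=1$, and $h_n(x,y|q)=\sum_{k=0}^n{n\brack k}P_k(x,y)$. *)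

(* Defs.v *)
From HB Require Import structures.
From mathcomp Require Import all_boot all_order all_algebra.
From mathcomp Require Import reals complex.
Set Implicit Arguments. Unset Strict Implicit. Unset Printing Implicit Defensive.
Import Order.TTheory GRing.Theory Num.Theory.
Local Open Scope ring_scope.

Section Defs.
Variable C : fieldType.

Definition qpoch (a q : C) (n : nat) : C := \prod_(j < n) (1 - a * q ^+ j).

Definition qbinom (q : C) (n k : nat) : C :=
  if (k <= n)%N then qpoch q q n / (qpoch q q k * qpoch q q (n - k)) else 0.

Definition Pn (q x y : C) (n : nat) : C := \prod_(j < n) (x - q ^+ j * y).

Definition hn (q x y : C) (n : nat) : C :=
  \sum_(0 <= k < n.+1) qbinom q n k * Pn q x y k.
End Defs.

(* Main.v *)
Require Import Defs.
From HB Require Import structures.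
From mathcomp Require Import all_boot all_order all_algebra.
From mathcomp Require Import reals complex.
From mathcomp Require Import ring zify.
Import Order.TTheory GRing.Theory Num.Theory.
Local Open Scope ring_scope.

Section Gen.
Variable C : fieldType.
Variable q : C.
Hypothesis Hq : forall j, q ^+ j.+1 != 1.

Local Notation c := (qpoch q q).
Local Notation qb := (qbinom q).

Lemma cS j : c j.+1 = c j * (1 - q ^+ j.+1).
Proof. by rewrite /qpoch big_ord_recr /= exprS. Qed.

Lemma c0 : c 0 = 1. Proof. by rewrite /qpoch big_ord0. Qed.

Lemma u_neq0 j : 1 - q ^+ j.+1 != 0.
Proof. by rewrite subr_eq0 eq_sym Hq. Qed.

Lemma c_neq0 j : c j != 0.
Proof. elim: j => [|j IH]; first by rewrite c0 oner_neq0.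
by rewrite cS mulf_neq0 // u_neq0. Qed.

Lemma qb_le n k : (k <= n)%N -> qb n k = c n / (c k * c (n - k)).
Proof. by rewrite /qbinom => ->. Qed.
Lemma qb_gt n k : (n < k)%N -> qb n k = 0.
Proof. by move=> h; rewrite /qbinom leqNgt h. Qed.
Lemma qbn0 n : qb n 0 = 1.
Proof. by rewrite qb_le // c0 mul1r subn0 divff // c_neq0. Qed.
Lemma qbnn n : qb n n = 1.
Proof. by rewrite qb_le // subnn c0 mulr1 divff // c_neq0. Qed.

Lemma P1 m s : qb m.+1 s.+1 = qb m s.+1 + q ^+ (m - s) * qb m s.
Proof.
case: (ltngtP s m) => [lt|gt|->].
- have [d ->] : exists d, m = (s + d.+1)%N by exists (m - s.+1)%N; lia.
  rewrite !qb_le; try lia.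
  have -> : ((s + d.+1).+1 - s.+1 = d.+1)%N by lia.
  have -> : ((s + d.+1) - s.+1 = d)%N by lia.
  have -> : ((s + d.+1) - s = d.+1)%N by lia.
  rewrite cS (cS s) (cS d).
  have -> : q ^+ (s + d.+1).+1 = q ^+ s.+1 * q ^+ d.+1 by rewrite -exprD; congr (_ ^+ _); lia.
  have h1 := u_neq0 s; have h2 := u_neq0 d; have h3 := c_neq0 s; have h4 := c_neq0 d;
  have h5 := c_neq0 (s + d.+1).
  field; rewrite ?h1 ?h2 ?h3 ?h4 ?h5 //.
- by rewrite !qb_gt ?mulr0 ?addr0 //; lia.
- by rewrite qbnn qb_gt // add0r subnn expr0 mul1r qbnn.
Qed.

Ltac nz := rewrite ?u_neq0 ?c_neq0 //.

Lemma P2 s l : qb s.+1 l.+1 = qb s l + q ^+ l.+1 * qb s l.+1.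
Proof.
case: (ltngtP l s) => [lt|gt|->].
- have [d ->] : exists d, s = (l + d.+1)%N by exists (s - l.+1)%N; lia.
  rewrite !qb_le; try lia.
  have -> : ((l + d.+1).+1 - l.+1 = d.+1)%N by lia.
  have -> : ((l + d.+1) - l.+1 = d)%N by lia.
  have -> : ((l + d.+1) - l = d.+1)%N by lia.
  rewrite cS (cS l) (cS d).
  have -> : q ^+ (l + d.+1).+1 = q ^+ l.+1 * q ^+ d.+1 by rewrite -exprD; congr (_ ^+ _); lia.
  have h1 := u_neq0 l; have h2 := u_neq0 d; have h3 := c_neq0 l; have h4 := c_neq0 d;
  have h5 := c_neq0 (l + d.+1).
  field; rewrite ?h1 ?h2 ?h3 ?h4 ?h5 //.
- by rewrite !qb_gt ?mulr0 ?addr0 //; lia.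
- by rewrite !qbnn qb_gt ?mulr0 ?addr0.
Qed.

Lemma A1 m s : (1 - q ^+ m) * qb m.-1 s = (1 - q ^+ (m - s)) * qb m s.
Proof.
case: m => [|m]; first by rewrite sub0n expr0 subrr !mul0r.
rewrite /=. case: (ltngtP s m.+1) => [lt|gt|->].
- have [d ->] : exists d, m = (s + d)%N by exists (m - s)%N; lia.
  rewrite !qb_le; try lia.
  have -> : ((s + d).+1 - s = d.+1)%N by lia.
  have -> : ((s + d) - s = d)%N by lia.
  rewrite cS (cS d).
  have h2 := u_neq0 d; have h3 := c_neq0 s; have h4 := c_neq0 d;
  have h5 := c_neq0 (s + d); have h1 := u_neq0 (s + d).
  field; rewrite ?h1 ?h2 ?h3 ?h4 ?h5 //.
- by rewrite !qb_gt ?mulr0 //; lia.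
- by rewrite subnn expr0 subrr mul0r qb_gt ?mulr0.
Qed.

Lemma Abs s l : (1 - q ^+ l.+1) * qb s l.+1 = (1 - q ^+ (s - l)) * qb s l.
Proof.
case: (ltnP l s) => [lt|ge].
- have [d ->] : exists d, s = (l + d.+1)%N by exists (s - l.+1)%N; lia.
  rewrite !qb_le; try lia.
  have -> : ((l + d.+1) - l.+1 = d)%N by lia.
  have -> : ((l + d.+1) - l = d.+1)%N by lia.
  rewrite (cS l) (cS d).
  have h1 := u_neq0 l; have h2 := u_neq0 d; have h3 := c_neq0 l; have h4 := c_neq0 d;
  have h5 := c_neq0 (l + d.+1).
  field; rewrite ?h1 ?h2 ?h3 ?h4 ?h5 //.
- have -> : (s - l = 0)%N by lia.
  by rewrite expr0 subrr mul0r qb_gt ?mulr0 //; lia.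
Qed.

Lemma Mn m l k : qb m l * qb (m - l) k = qb m (l + k) * qb (l + k) l.
Proof.
case: (leqP (l + k) m) => [le|gt].
- have [d ->] : exists d, m = (l + k + d)%N by exists (m - (l + k))%N; lia.
  rewrite !qb_le; try lia.
  have -> : (l + k + d - l - k = d)%N by lia.
  have -> : (l + k + d - (l + k) = d)%N by lia.
  have -> : (l + k - l = k)%N by lia.
  have -> : (l + k + d - l = k + d)%N by lia.
  have h1 := c_neq0 l; have h2 := c_neq0 d; have h3 := c_neq0 k; have h4 := c_neq0 (k + d);
  have h5 := c_neq0 (l + k).
  field; rewrite ?h1 ?h2 ?h3 ?h4 ?h5 //.
- rewrite [qb m (l + k)]qb_gt // mul0r.
  case: (leqP l m) => [le|lt]; last by rewrite qb_gt // mul0r.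
  by rewrite [qb (m - l) k]qb_gt ?mulr0 //; lia.
Qed.

Lemma qb_c l k : qb (l + k) l * c l * c k = c (l + k).
Proof.
rewrite qb_le; last lia.
have -> : (l + k - l = k)%N by lia.
have h1 := c_neq0 l; have h3 := c_neq0 k.
field; rewrite ?h1 ?h3 //.
Qed.

Lemma GS n s : qb n s.+1 * c s.+1 = qb n s * c s * (1 - q ^+ (n - s)).
Proof.
case: (ltngtP s n) => [lt|gt|->].
- have [d ->] : exists d, n = (s + d.+1)%N by exists (n - s.+1)%N; lia.
  rewrite !qb_le; try lia.
  have -> : ((s + d.+1) - s.+1 = d)%N by lia.
  have -> : ((s + d.+1) - s = d.+1)%N by lia.
  rewrite (cS s) (cS d).
  have h1 := u_neq0 s; have h2 := u_neq0 d; have h3 := c_neq0 s; have h4 := c_neq0 d.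
  field; rewrite ?h1 ?h2 ?h3 ?h4 //.
- by rewrite !qb_gt ?mul0r //; lia.
- by rewrite subnn expr0 subrr mulr0 qb_gt ?mul0r.
Qed.

Lemma sum_trunc (F : nat -> C) b B : (b <= B)%N -> (forall i, (b <= i)%N -> F i = 0) ->
  \sum_(0 <= i < B) F i = \sum_(0 <= i < b) F i.
Proof.
move=> hb hF; rewrite (@big_cat_nat _ _ _ b 0 B _ _ (leq0n b) hb) /=.
have -> : \sum_(b <= i < B) F i = 0.
  rewrite big_nat_cond big1 // => i /andP[/andP[hi _] _]; exact: hF.
by rewrite addr0.
Qed.

Variables x y : C.
Local Notation P := (Pn q x y).
Local Notation h := (hn q x y).

Lemma PS k : P k.+1 = P k * (x - q ^+ k * y).
Proof. by rewrite /Pn big_ord_recr. Qed.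

Lemma hB n B : (n < B)%N -> h n = \sum_(0 <= k < B) qb n k * P k.
Proof.
move=> hnB; rewrite /hn (sum_trunc _ _ _ hnB) // => i hi; by rewrite qb_gt ?mul0r.
Qed.

Lemma hrec K : h K.+1 = (1 + x - y * q ^+ K) * h K - x * (1 - q ^+ K) * h K.-1.
Proof.
have E1 : h K.+1 = h K + \sum_(0 <= k < K.+1) q ^+ (K - k) * qb K k * (P k * (x - q ^+ k * y)).
  rewrite (hB K.+1 K.+2) // (hB K K.+2) //.
  rewrite big_nat_recl // [X in _ = X + _]big_nat_recl // !qbn0 -addrA; congr (_ + _); rewrite -big_split /=.
  apply: eq_bigr => k _; rewrite P1 PS; ring.
have E2 : \sum_(0 <= k < K.+1) q ^+ (K - k) * qb K k * (P k * q ^+ k) = q ^+ K * h K.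
  rewrite (hB K K.+1) // mulr_sumr big_nat_cond [RHS]big_nat_cond.
  apply: eq_bigr => k /andP[/andP[_ hk] _].
  have -> : q ^+ K = q ^+ (K - k) * q ^+ k by rewrite -exprD subnK //; lia.
  ring.
have E3 : \sum_(0 <= k < K.+1) q ^+ (K - k) * qb K k * P k = h K - (1 - q ^+ K) * h K.-1.
  rewrite (hB K K.+1) // (hB K.-1 K.+1); last lia.
  rewrite mulr_sumr -sumrB; apply: eq_bigr => k _.
  rewrite mulrA A1; ring.
rewrite E1.
have -> : \sum_(0 <= k < K.+1) q ^+ (K - k) * qb K k * (P k * (x - q ^+ k * y)) =
  x * \sum_(0 <= k < K.+1) q ^+ (K - k) * qb K k * P k -
  y * \sum_(0 <= k < K.+1) q ^+ (K - k) * qb K k * (P k * q ^+ k).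
  rewrite !mulr_sumr -sumrB; apply: eq_bigr => k _; ring.
rewrite E2 E3; ring.
Qed.

Variable n : nat.

Definition w l k := (-1) ^+ k * x ^+ l * y ^+ k * q ^+ 'C(k, 2).
Definition tau m l k := qb m l * qb n l * qb (m - l) k * qb (n - l) k
     * c k * c l * (-1) ^+ k * x ^+ l * y ^+ k * q ^+ 'C(k, 2).
Local Notation G s := (qb n s * c s).

Lemma tau_alt m l k : tau m l k = qb m (l + k) * qb (l + k) l * G (l + k) * w l k.
Proof.
rewrite /tau /w.
transitivity ((qb m l * qb (m - l) k) * (qb n l * qb (n - l) k) * c k * c l *
   ((-1) ^+ k * x ^+ l * y ^+ k * q ^+ 'C(k, 2))); first ring.
rewrite !Mn -(qb_c l k); ring.
Qed.

Lemma tau0 m l k : ((m < l + k) || (n < l + k))%N -> tau m l k = 0.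
Proof.
by move=> /orP[h|h]; rewrite tau_alt (qb_gt _ _ h); ring.
Qed.

Lemma PI m l k : tau m.+1 l k = tau m l k
  + (if l is l'.+1 then x * (1 - q ^+ (n + m - 2 * l' - k)) * tau m l' k else 0)
  + (if k is k'.+1 then y * (q ^+ (n + m - 2 * l - k') - q ^+ m) * tau m l k' else 0)
  - (if l is l'.+1 then x * (1 - q ^+ m) * tau m.-1 l' k else 0).
Proof.
case: l => [|l']; case: k => [|k'].
- by rewrite !tau_alt !qbn0 !addr0 subr0.
- rewrite !tau_alt /= !add0n !qbn0.
  set s := k'.
  case: (ltnP m s) => [hms|hsm].
    rewrite !(qb_gt m) ?(qb_gt m.+1) //; try lia; ring.
  case: (ltnP n s) => [hns|hsn].
    rewrite !(qb_gt n) //; try lia; ring.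
  have [a Hm] : exists a, m = (s + a)%N by exists (m - s)%N; lia.
  have [b Hn] : exists b, n = (s + b)%N by exists (n - s)%N; lia.
  rewrite P1 GS.
  have -> : (m - s = a)%N by lia.
  have -> : (n - s = b)%N by lia.
  have -> : (n + m - 2 * 0 - k' = k' + a + b)%N by rewrite /s in Hm Hn *; lia.
  have -> : q ^+ m = q ^+ k' * q ^+ a by rewrite -!exprD Hm /s.
  rewrite /w binS bin1 !exprD !exprS; ring.
- rewrite !tau_alt /= !addn0.
  set s := l'.
  case: (ltnP m s) => [hms|hsm].
    rewrite !(qb_gt m) ?(qb_gt m.+1) ?(qb_gt m.-1) //; try lia; ring.
  case: (ltnP n s) => [hns|hsn].
    rewrite !(qb_gt n) //; try lia; ring.
  have [a Hm] : exists a, m = (s + a)%N by exists (m - s)%N; lia.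
  have [b Hn] : exists b, n = (s + b)%N by exists (n - s)%N; lia.
  have -> : x * (1 - q ^+ m) * (qb m.-1 s * qb s s * G s * w l' 0) =
     x * ((1 - q ^+ (m - s)) * qb m s) * qb s s * G s * w l' 0 by rewrite -A1; ring.
  rewrite P1 GS !qbnn.
  have -> : (m - s = a)%N by lia.
  have -> : (n - s = b)%N by lia.
  have -> : (n + m - 2 * l' - 0 = a + b)%N by rewrite /s in Hm Hn *; lia.
  rewrite /w !exprD !exprS; ring.
- rewrite !tau_alt.
  have -> : (l'.+1 + k'.+1 = (l' + k'.+1).+1)%N by lia.
  have -> : (l'.+1 + k' = l' + k'.+1)%N by lia.
  set s := (l' + k'.+1)%N.
  case: (ltnP m s) => [hms|hsm].
    rewrite !(qb_gt m) ?(qb_gt m.+1) ?(qb_gt m.-1) //; try lia; ring.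
  case: (ltnP n s) => [hns|hsn].
    rewrite !(qb_gt n) //; try lia; ring.
  have [a Hm] : exists a, m = (s + a)%N by exists (m - s)%N; lia.
  have [b Hn] : exists b, n = (s + b)%N by exists (n - s)%N; lia.
  have -> : x * (1 - q ^+ m) * (qb m.-1 s * qb s l' * G s * w l' k'.+1) =
     x * ((1 - q ^+ (m - s)) * qb m s) * qb s l' * G s * w l' k'.+1 by rewrite -A1; ring.
  rewrite P1 P2 GS.
  have Ab := Abs s l'.
  have E0 : (s - l' = k'.+1)%N by rewrite /s; lia.
  rewrite E0 in Ab.
  have -> : (m - s = a)%N by lia.
  have -> : (n - s = b)%N by lia.
  have -> : (n + m - 2 * l' - k'.+1 = k'.+1 + a + b)%N by rewrite /s in Hm Hn *; lia.
  have -> : (n + m - 2 * l'.+1 - k' = k' + a + b)%N by rewrite /s in Hm Hn *; lia.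
  have -> : q ^+ m = q ^+ l' * q ^+ k'.+1 * q ^+ a by rewrite -!exprD Hm /s; congr (_ ^+ _); lia.
  apply/eqP; rewrite -subr_eq0; apply/eqP.
  transitivity (qb m s * G s * (- x * x ^+ l' * y * y ^+ k' * (-1) ^+ k' * q ^+ 'C(k', 2) * q ^+ k')
     * q ^+ a * q ^+ b * ((1 - q ^+ l'.+1) * qb s l'.+1 - (1 - q ^+ k'.+1) * qb s l')).
    rewrite /w binS bin1 !exprD !exprS; ring.
  by rewrite Ab subrr mulr0.
Qed.

Lemma shift (f g : nat -> C) B' : f 0 = 0 -> (forall i, (i < B')%N -> f i.+1 = g i) ->
  g B' = 0 -> \sum_(0 <= i < B'.+1) f i = \sum_(0 <= i < B'.+1) g i.
Proof.
move=> f0 fg gB; rewrite big_nat_recl // big_nat_recr //= f0 gB add0r addr0.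
by apply: eq_big_nat => i /andP[_ hi]; exact: fg.
Qed.

Definition S m B := \sum_(0 <= l < B) \sum_(0 <= k < B) tau m l k * h (n + m - 2 * l - k).

Lemma step m B : (m.+1 < B)%N -> h m * h n = S m B -> h m.-1 * h n = S m.-1 B ->
  h m.+1 * h n = S m.+1 B.
Proof.
case: B => [//|B'] hB IH1 IH2.
rewrite hrec; transitivity ((1 + x - y * q ^+ m) * (h m * h n) - x * (1 - q ^+ m) * (h m.-1 * h n)); first ring.
rewrite IH1 IH2.
have E : S m.+1 B'.+1 =
  \sum_(0 <= l < B'.+1) \sum_(0 <= k < B'.+1) tau m l k * h (n + m.+1 - 2 * l - k)
  + \sum_(0 <= l < B'.+1) \sum_(0 <= k < B'.+1)
      (if l is l'.+1 then x * (1 - q ^+ (n + m - 2 * l' - k)) * tau m l' k else 0) * h (n + m.+1 - 2 * l - k)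
  + \sum_(0 <= l < B'.+1) \sum_(0 <= k < B'.+1)
      (if k is k'.+1 then y * (q ^+ (n + m - 2 * l - k') - q ^+ m) * tau m l k' else 0) * h (n + m.+1 - 2 * l - k)
  - \sum_(0 <= l < B'.+1) \sum_(0 <= k < B'.+1)
      (if l is l'.+1 then x * (1 - q ^+ m) * tau m.-1 l' k else 0) * h (n + m.+1 - 2 * l - k).
  rewrite /S -!big_split -sumrB /=; apply: eq_bigr => l _.
  rewrite -!big_split -sumrB /=; apply: eq_bigr => k _.
  by rewrite PI mulrBl !mulrDl.
rewrite E; clear E.
have Ex : \sum_(0 <= l < B'.+1) \sum_(0 <= k < B'.+1)
      (if l is l'.+1 then x * (1 - q ^+ (n + m - 2 * l' - k)) * tau m l' k else 0) * h (n + m.+1 - 2 * l - k)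
  = \sum_(0 <= l < B'.+1) \sum_(0 <= k < B'.+1)
      x * (1 - q ^+ (n + m - 2 * l - k)) * tau m l k * h (n + m - 2 * l - k).-1.
  apply: shift.
  - by rewrite big1 // => k _; rewrite mul0r.
  - move=> i _; apply: eq_bigr => k _ /=.
    have -> : (n + m.+1 - 2 * i.+1 - k = (n + m - 2 * i - k).-1)%N by lia.
    by [].
  - rewrite big1 // => k _; rewrite tau0 ?mulr0 ?mul0r //; apply/orP; left; lia.
have Ey : \sum_(0 <= l < B'.+1) \sum_(0 <= k < B'.+1)
      (if k is k'.+1 then y * (q ^+ (n + m - 2 * l - k') - q ^+ m) * tau m l k' else 0) * h (n + m.+1 - 2 * l - k)
  = \sum_(0 <= l < B'.+1) \sum_(0 <= k < B'.+1)
      y * (q ^+ (n + m - 2 * l - k) - q ^+ m) * tau m l k * h (n + m - 2 * l - k).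
  apply: eq_bigr => l _; apply: shift.
  - by rewrite mul0r.
  - move=> i _ /=.
    have -> : (n + m.+1 - 2 * l - i.+1 = n + m - 2 * l - i)%N by lia.
    by [].
  - rewrite tau0 ?mulr0 ?mul0r //; apply/orP; left; lia.
have Ez : \sum_(0 <= l < B'.+1) \sum_(0 <= k < B'.+1)
      (if l is l'.+1 then x * (1 - q ^+ m) * tau m.-1 l' k else 0) * h (n + m.+1 - 2 * l - k)
  = \sum_(0 <= l < B'.+1) \sum_(0 <= k < B'.+1)
      x * (1 - q ^+ m) * tau m.-1 l k * h (n + m.-1 - 2 * l - k).
  apply: shift.
  - by rewrite big1 // => k _; rewrite mul0r.
  - move=> i _; apply: eq_bigr => k _ /=.
    case: m {IH1 IH2 hB Ex Ey} => [|m]; first by rewrite expr0 subrr mulr0 !mul0r.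
    have -> : (n + m.+2 - 2 * i.+1 - k = n + m.+1.-1 - 2 * i - k)%N by lia.
    by [].
  - rewrite big1 // => k _; rewrite tau0 ?mulr0 ?mul0r //; apply/orP; left; lia.
rewrite Ex Ey Ez; congr (_ - _); last first.
  rewrite /S mulr_sumr; apply: eq_bigr => l _; rewrite mulr_sumr; apply: eq_bigr => k _; ring.
rewrite /S mulr_sumr -!big_split /=; apply: eq_bigr => l _.
rewrite mulr_sumr -!big_split /=; apply: eq_bigr => k _.
case: (boolP ((m < l + k) || (n < l + k))%N) => [hz|].
  rewrite tau0 //; ring.
rewrite negb_or -!leqNgt => /andP[h1 h2].
have -> : (n + m.+1 - 2 * l - k = (n + m - 2 * l - k).+1)%N by lia.
rewrite hrec; ring.
Qed.

Lemma h0 : h 0 = 1.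
Proof. by rewrite /hn big_nat1 qbn0 /Pn big_ord0 mul1r. Qed.

Lemma S0 B : (0 < B)%N -> S 0 B = h n.
Proof.
move=> hB; rewrite /S (sum_trunc _ 1 B) //; last first.
  move=> l hl; rewrite big1 // => k _; rewrite tau0 ?mul0r //; apply/orP; left; lia.
rewrite big_nat1 (sum_trunc _ 1 B) //; last first.
  move=> k hk; rewrite tau0 ?mul0r //; apply/orP; left; lia.
rewrite big_nat1 tau_alt !qbn0 /w /= !expr0 c0.
have -> : (n + 0 - 0 - 0 = n)%N by lia.
by rewrite !mul1r.
Qed.

Lemma main_aux M m : (m <= M)%N -> forall B, (m < B)%N -> h m * h n = S m B.
Proof.
elim: M m => [|M IH] m hm B hB.
  have -> : m = 0%N by lia.
  by rewrite h0 mul1r S0 //; lia.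
case: (leqP m M) => [le|gt]; first exact: IH.
have -> : m = M.+1 by lia.
apply: step; first lia.
  by apply: IH => //; lia.
by apply: IH => //; lia.
Qed.
End Gen.

Theorem corollary3p4 (R : realType) (q x y : R[i]) (n m : nat) :
  `|q| < 1 ->
  hn q x y n * hn q x y m =
  \sum_(0 <= l < (minn m n).+1) \sum_(0 <= k < (minn m n).+1)
     qbinom q m l * qbinom q n l * qbinom q (m - l) k * qbinom q (n - l) k
     * qpoch q q k * qpoch q q l * (-1) ^+ k * x ^+ l * y ^+ k
     * q ^+ 'C(k, 2) * hn q x y (n + m - 2 * l - k).
Proof.
move=> hq.
have Hq : forall j, q ^+ j.+1 != 1.
  move=> j; apply/negP => /eqP e.
  have : `|q ^+ j.+1| < 1 by rewrite normrX exprn_ilt1 // normr_ge0.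
  by rewrite e normr1 ltxx.
rewrite mulrC (@main_aux _ q Hq x y n m m (leqnn m) (m.+1)) //.
rewrite /S (sum_trunc _ _ (minn m n).+1 m.+1); last 2 first.
- lia.
- move=> l hl; rewrite big1 // => k _; rewrite tau0 ?mul0r //; apply/orP; lia.
apply: eq_bigr => l _.
rewrite (sum_trunc _ _ (minn m n).+1 m.+1); last 2 first.
- lia.
- move=> k hk; rewrite tau0 ?mul0r //; apply/orP; lia.
by [].
Qed.
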